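(* Let $\Theta=\{\theta_1,\dots,\theta_n\}$ with $n\ge 2$, and suppose the pair $(\mathcal{E},C)$ satisfies Assumption (A) below. Then there exists a contract $(u,d)$ with $u>0,d>0$ that screens the uninformed Bob. That is, $W(\mu)\ge 0$ for every prior $\mu\in\Delta$, while $$\sup_{\sigma\in\Delta}\ \min_{1\le j\le n}\,(u-d\,\sigma_j)<0.$$ Assumption (A): there exist $\varepsilon>0$, $\eta>0$ and $T\in\mathbb{R}_+$ such that for every $\mu\in\Delta$ with $\|\mu-\mathbf{\tfrac1n}\|<\eta$ there is an experiment $E_\mu\in\mathcal{E}$ with $\Upsilon(E_\mu,\mu)>\varepsilon$ and $C(E_\mu,\mu)\le T$. Here $\mathbf{\tfrac1n}$ denotes the uniform distribution $(1/n,\dots,1/n)$.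
   Context: **States and beliefs.** $\Theta=\{\theta_1,\dots,\theta_n\}$ is a finite set of states. $\Delta=\Delta(\Theta)$ is the simplex of probability vectors $\mu=(\mu_1,\dots,\mu_n)$. **Experiments.** An experiment is a pair $E=(S,\chi)$, where $S$ is a measurable signal space and $\chi(\theta_i)=P_i$ is a probability measure on $S$. Fix a $\sigma$-finite measure $\nu$ on $S$ dominating $P_1,\dots,P_n$, and let $p_i=dP_i/d\nu$. Define $$\Upsilon(E,\mu)=\min_i \mu_i-\int_S \min_i\{\mu_i p_i(s)\}\,d\nu(s),$$ which does not depend on the choice of $\nu$. $\mathcal{E}$ is a given set of available experiments. $C:\mathcal{E}\times\Delta\to\mathbb{R}_+\cup\{\infty\}$ is a cost functional, with $C(E,\mu)$ the cost of experiment $E$ to a Bob with prior $\mu$. **Contract.** A contract is a pair $(u,d)$ with $u>0$ and $d>0$. Bob either rejects (payoff $0$) or accepts. If he accepts, he receives $u$ and announces a state (possibly at random). The true state is then drawn, and Bob pays $d$ if the announced state is the realized state. **Informed Bob.** The informed Bob has a prior $\mu\in\Delta$ and is an expected-utility maximizer. He may either acquire no information, or acquire one experiment $E\in\mathcal{E}$ at cost $C(E,\mu)$ and observe its signal. He then announces a state of minimal posterior probability. His optimal payoff from accepting is $$W(\mu)=\max\Big\{u-d\min_i\mu_i,\ \sup_{E\in\mathcal{E}}\Big[u-d\int_S\min_i\{\mu_ip_i(s)\}\,d\nu(s)-C(E,\mu)\Big]\Big\}.$$ He (weakly) prefers to accept iff $W(\mu)\ge 0$. **Uninformed Bob.** The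 uninformed Bob cannot acquire information. He evaluates a randomized announcement $\sigma\in\Delta$ by its worst-case payoff over states, $\min_j(u-d\sigma_j)$. He strictly prefers to reject iff $\sup_{\sigma\in\Delta}\min_j(u-d\sigma_j)<0$. **Screening.** A contract screens the uninformed Bob if the informed Bob prefers to accept it for every prior $\mu\in\Delta$, and the uninformed Bob strictly prefers to reject it. *)

(* Defs.v *)
From HB Require Import structures.
From mathcomp Require Import all_boot all_order all_algebra.
From mathcomp Require Import all_classical all_reals all_analysis.
Set Implicit Arguments. Unset Strict Implicit. Unset Printing Implicit Defensive.
Import Order.TTheory GRing.Theory Num.Theory.
Local Open Scope classical_set_scope.
Local Open Scope ring_scope.

(* An experiment with n states: a measurable signal space S, a sigma-finite
   dominating measure nu on S, and densities p_i = dP_i/dnu (so that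
   P_i(A) = \int_A p_i dnu are probability measures). *)
Record experiment (R : realType) (n : nat) := Experiment {
  ex_disp : measure_display;
  ex_S : measurableType ex_disp;
  ex_nu : {measure set ex_S -> \bar R};
  ex_nu_sfinite : sigma_finite setT ex_nu;
  ex_p : 'I_n -> ex_S -> R;
  ex_p_meas : forall i, measurable_fun setT (ex_p i);
  ex_p_ge0 : forall i s, 0 <= ex_p i s;
  ex_p_prob : forall i, (\int[ex_nu]_s (ex_p i s)%:E = 1)%E
}.

Definition simplex (R : realType) (n : nat) : set ('I_n -> R) :=
  [set mu | (forall i, 0 <= mu i) /\ \sum_i mu i = 1].

(* min_i f_i, as an extended real (equals the true minimum when n >= 1) *)
Definition emin (R : realType) (n : nat) (f : 'I_n -> R) : \bar R :=
  \big[Order.min/+oo%E]_i (f i)%:E.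

Definition int_min (R : realType) (n : nat) (E : experiment R n) (mu : 'I_n -> R) : \bar R :=
  (\int[@ex_nu _ _ E]_s emin (fun i => (mu i * @ex_p _ _ E i s)%R))%E.

Definition Upsilon (R : realType) (n : nat) (E : experiment R n) (mu : 'I_n -> R) : \bar R :=
  (emin mu - int_min E mu)%E.

Definition W (R : realType) (n : nat) (Ecal : experiment R n -> Prop)
  (C : experiment R n -> ('I_n -> R) -> \bar R) (u d : R) (mu : 'I_n -> R) : \bar R :=
  Order.max (u%:E - d%:E * emin mu)%E
    (ereal_sup [set x | exists E, Ecal E /\ x = (u%:E - d%:E * int_min E mu - C E mu)%E]).

Definition uninformed_value (R : realType) (n : nat) (u d : R) : \bar R :=
  ereal_sup [set emin (fun j => u - d * sigma j) | sigma in @simplex R n].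

Definition assumptionA (R : realType) (n : nat) (Ecal : experiment R n -> Prop)
  (C : experiment R n -> ('I_n -> R) -> \bar R) : Prop :=
  exists eps eta T : R, 0 < eps /\ 0 < eta /\ 0 <= T /\
    forall mu, @simplex R n mu ->
      Num.sqrt (\sum_i (mu i - n%:R^-1) ^+ 2) < eta ->
      exists E, Ecal E /\ (eps%:E < Upsilon E mu)%E /\ (C E mu <= T%:E)%E.

Definition screens (R : realType) (n : nat) (Ecal : experiment R n -> Prop)
  (C : experiment R n -> ('I_n -> R) -> \bar R) (u d : R) : Prop :=
  (forall mu, @simplex R n mu -> (0 <= W Ecal C u d mu)%E) /\
  (@uninformed_value R n u d < 0)%E.

(* Main.v *)
Require Import Defs.
From HB Require Import structures.
From mathcomp Require Import all_boot all_order all_algebra.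
From mathcomp Require Import all_classical all_reals all_analysis.
From mathcomp Require Import ring lra.
Import Order.TTheory GRing.Theory Num.Theory.
Local Open Scope classical_set_scope.
Local Open Scope ring_scope.

Lemma emin_att (R : realType) (n : nat) (f : 'I_n -> R) (j : 'I_n) :
  exists i0, emin f = (f i0)%:E /\ forall k, f i0 <= f k.
Proof.
have [i0 _ E] := @eq_bigmin _ _ 'I_n +oo%E j predT (fun i => (f i)%:E) erefl
   (fun i _ => leey _).
exists i0; split; first exact: E.
move=> k; rewrite -lee_fin -E.
exact: (@bigmin_le _ _ 'I_n +oo%E k (fun i => (f i)%:E)).
Qed.

Lemma emin_le (R : realType) (n : nat) (f : 'I_n -> R) (k : 'I_n) :
  (emin f <= (f k)%:E)%E.
Proof. exact: (@bigmin_le _ _ 'I_n +oo%E k (fun i => (f i)%:E)). Qed.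

Lemma sum_bound (R : realType) (n : nat) (f : 'I_n -> R) (k : 'I_n) :
  (forall i, f i <= f k) -> \sum_i f i <= n%:R * f k.
Proof.
move=> H; apply: le_trans (ler_sum _ (fun i _ => H i)) _.
by rewrite sumr_const card_ord mulr_natl.
Qed.

Lemma sum_bound_ge (R : realType) (n : nat) (f : 'I_n -> R) (k : 'I_n) :
  (forall i, f k <= f i) -> n%:R * f k <= \sum_i f i.
Proof.
move=> H; apply: le_trans _ (ler_sum _ (fun i _ => H i)).
by rewrite sumr_const card_ord mulr_natl.
Qed.

Arguments emin_att {R n} f.
Arguments emin_le {R n} f.
Arguments sum_bound {R n} f.
Arguments sum_bound_ge {R n} f.

Theorem theorem1 (R : realType) (n : nat) (Ecal : experiment R n -> Prop)
  (C : experiment R n -> ('I_n -> R) -> \bar R) :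
  (2 <= n)%N ->
  (forall E mu, Ecal E -> @simplex R n mu -> (0 <= C E mu)%E) ->
  assumptionA Ecal C ->
  exists u d : R, 0 < u /\ 0 < d /\ screens Ecal C u d.
Proof.
move=> n2 Cge0 [eps [eta [T [eps0 [eta0 [T0 HA]]]]]].
have n0 : (0 < n)%N by apply: leq_trans n2.
pose j0 : 'I_n := Ordinal n0.
pose N : R := n%:R.
have N2 : 2 <= N by rewrite /N (_ : 2 = 2%:R :> R) // ler_nat.
pose w := N^-1.
have wN : w * N = 1 by rewrite /w mulVf //; apply/eqP => h; rewrite h in N2; lra.
have w0 : 0 < w by rewrite /w invr_gt0; lra.
pose e' := Num.min eta 1.
have e'1 : e' <= 1 by rewrite /e' ge_min lexx orbT.
have e'e : e' <= eta by rewrite /e' ge_min lexx.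
have e'0 : 0 < e' by rewrite /e' lt_min eta0 ltr01.
pose delta := e' * w * w.
have delta0 : 0 < delta by rewrite /delta !mulr_gt0.
pose d := (T + 1) / eps.
have deps : d * eps = T + 1 by rewrite /d mulrVK // unitfE lt0r_neq0.
have d0 : 0 < d by rewrite /d divr_gt0 //; lra.
pose g := Num.min 1 (d * delta).
have g1 : g <= 1 by rewrite /g ge_min lexx.
have g2 : g <= d * delta by rewrite /g ge_min lexx orbT.
have g0 : 0 < g by rewrite /g lt_min ltr01 mulr_gt0.
have dd : d * delta < d * w.
  rewrite /delta ltr_pM2l //.
  have : w < 1 by rewrite /w invf_lt1; lra.
  timeout 20 nra.
clearbody g d.
exists (d * w - g), d; split; first lra.
split => //; split.
- move=> mu Hmu.
  have [i0 [Emi0 Hi0]] := emin_att mu j0.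
  have mw : mu i0 <= w.
    have := sum_bound_ge _ _ Hi0; rewrite (proj2 Hmu) -/N => h.
    have : w * (N * mu i0) <= w * 1 by rewrite ler_pM2l.
    by rewrite mulrA wN; lra.
  rewrite /W le_max; apply/orP.
  case: (lerP (mu i0) (w - delta)) => Hc.
    left; rewrite Emi0 -EFinM -EFinB lee_fin; timeout 20 nra.
  right.
  have Hlow : forall i, w - delta < mu i by move=> i; exact: lt_le_trans Hc (Hi0 i).
  have Hup : forall i, mu i - w + delta <= N * delta.
    move=> i.
    have hs : \sum_k (mu k - w + delta) = N * delta.
      rewrite big_split /= sumrB (proj2 Hmu) !sumr_const card_ord -[w *+ n]mulr_natl -[delta *+ n]mulr_natl -/N.
      rewrite [N * w]mulrC wN; ring.
    rewrite -hs (bigD1 i) //= lerDl sumr_ge0 // => k _; have := Hlow k; lra.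
  have hi : forall i, (mu i - w)^+2 <= (N*delta)^+2.
    move=> i; have ND : delta <= N * delta by rewrite ler_peMl //; lra.
    have ha : `|mu i - w| <= N * delta.
      by rewrite ler_norml; apply/andP; split; have := Hlow i; have := Hup i; lra.
    rewrite -real_normK ?num_real //.
    have h0 : 0 <= `|mu i - w| by [].
    by rewrite !expr2; apply: ler_pM.
  have Hs : \sum_i (mu i - w)^+2 <= N * (N * delta)^+2.
    apply: le_trans (ler_sum _ (fun i _ => hi i)) _.
    by rewrite sumr_const card_ord -[_ *+ n]mulr_natl.
  have Hs2 : N * (N*delta)^+2 < e'^+2.
    have -> : N * (N * delta) ^+ 2 = e'^+2 * w * (w*N)^+3 by rewrite /delta; ring.
    rewrite wN expr1n mulr1.
    have : w < 1 by rewrite /w invf_lt1; lra.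
    have : 0 < e'^+2 by rewrite exprn_gt0.
    by move=> h1 h2; rewrite -[X in _ < X]mulr1 ltr_pM2l.
  have Hsq : Num.sqrt (\sum_i (mu i - n%:R^-1) ^+ 2) < eta.
    apply: (lt_le_trans _ e'e).
    rewrite -(ger0_norm (ltW e'0)) -sqrtr_sqr ltr_sqrt ?exprn_gt0 //.
    exact: le_lt_trans Hs Hs2.
  have [E [HE [Hups HC]]] := HA mu Hmu Hsq.
  have hC := Cge0 E mu HE Hmu.
  apply: (le_trans _ (ereal_sup_ubound _)); last first.
    by exists E; split.
  move: Hups; rewrite /Upsilon Emi0.
  case: (int_min E mu) => [r| |] Hups.
  - case: (C E mu) hC HC => [c| |] hC HC //.
    rewrite -EFinM -!EFinB lee_fin.
    rewrite -EFinB lte_fin in Hups.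
    rewrite lee_fin in hC HC.
    have h1 : d * r <= d * (mu i0 - eps) by rewrite ler_pM2l //; lra.
    have h2 : d * mu i0 <= d * w by rewrite ler_pM2l.
    have h3 : d * (mu i0 - eps) = d * mu i0 - d * eps by ring.
    rewrite lee_fin in HC; lra.
  - by [].
  - case: (C E mu) hC HC => [c| |] hC HC //.
    by rewrite mulrNy gtr0_sg // mul1e /= addey // addye // leey.
- rewrite /uninformed_value.
  apply: (@le_lt_trans _ _ ((d*w - g) - d*w)%:E).
    apply: ub_ereal_sup => _ [s Hs <-].
    have [k [_ Hk]] := emin_att (fun i => - s i) j0.
    have Hk' : forall i, s i <= s k by move=> i; rewrite -lerN2; exact: Hk.
    have := sum_bound _ _ Hk'; rewrite (proj2 Hs) -/N => h.
    have hw : w <= s k.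
      have : w * 1 <= w * (N * s k) by rewrite ler_pM2l.
      by rewrite mulrA wN mulr1 mul1r.
    apply: le_trans (emin_le _ k) _; rewrite lee_fin.
    have : d * w <= d * s k by rewrite ler_pM2l.
    lra.
  rewrite lte_fin; lra.
Qed.
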